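(* Let $G$ be a finite group and $\mathcal{A}$ a finite subgroup of $\mathbb{C}^\times$. Let $\psi\colon G\times G\to\mathcal{A}$ be a normalised 2-cocycle, and let $\Gamma=(G,\mathcal{A},\psi)$ be the central extension with underlying set $\mathcal{A}\times G$ and multiplication $(a,g)(b,h)=(ab\,\psi(g,h),gh)$. Index rows and columns of $|G|\times|G|$ matrices by the elements of $G$ in a fixed ordering, and for $(a,g)\in\Gamma$ define \[R(a,g)=a\left[\psi(x,g)\delta^{xg}_{y}\right]_{x,y\in G},\qquad L(a,g)=a\left[\psi(g,g^{-1}x)\delta^{x}_{gy}\right]_{x,y\in G}.\] Then a complex matrix $M$ indexed by $G$ satisfies $R(a,g)ML(a,g)^\ast=M$ for all $(a,g)\in\Gamma$ if and only if there exists a map $\phi\colon G\to\mathbb{C}$ such that $M=[\psi(x,y)\phi(xy)]_{x,y\in G}$.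
   Context: A normalised 2-cocycle is a function $\psi\colon G\times G\to\mathcal{A}$ with $\psi(g,1)=\psi(1,g)=1$ and $\psi(g,h)\psi(gh,k)=\psi(g,hk)\psi(h,k)$ for all $g,h,k\in G$. $\delta^a_b$ is the Kronecker delta and $^\ast$ denotes conjugate transpose. *)

(* Defs.v *)
(* The complex numbers are modelled as R[i] = complex R
   for an arbitrary R : realType (mathcomp-real-closed's complex numbers
   over a model of the reals). *)
From HB Require Import structures.
From mathcomp Require Import all_boot all_order all_algebra all_fingroup.
From mathcomp Require Import complex reals.
Set Implicit Arguments.
Unset Strict Implicit.
Unset Printing Implicit Defensive.
Import GRing.Theory Num.Theory.
Local Open Scope ring_scope.

(* The elements of the finite group gT, in the fixed ordering enum gT;
   rows/columns of |G| x |G| matrices are indexed through this ordering. *)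
Definition gidx (gT : finGroupType) (i : 'I_#|gT|) : gT := enum_val i.

Definition finite_subgroup_units (C : fieldType) (A : seq C) : Prop :=
  [/\ 0 \notin A, 1 \in A,
      {in A &, forall a b, a * b \in A} &
      {in A, forall a, a^-1 \in A}].

Definition normalised_cocycle (gT : finGroupType) (C : fieldType)
    (A : seq C) (psi : gT -> gT -> C) : Prop :=
  [/\ forall g h, psi g h \in A,
      forall g, psi g 1%g = 1 /\ psi 1%g g = 1 &
      forall g h k, psi g h * psi (g * h)%g k = psi g (h * k)%g * psi h k].

Definition Rmat (gT : finGroupType) (C : fieldType) (psi : gT -> gT -> C)
    (a : C) (g : gT) : 'M[C]_#|gT| :=
  \matrix_(i, j) (a * (psi (gidx i) g * ((gidx i * g)%g == gidx j)%:R)).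

Definition Lmat (gT : finGroupType) (C : fieldType) (psi : gT -> gT -> C)
    (a : C) (g : gT) : 'M[C]_#|gT| :=
  \matrix_(i, j) (a * (psi g (g^-1 * gidx i)%g * (gidx i == (g * gidx j)%g)%:R)).

Definition adjmx (C : numClosedFieldType) (m n : nat) (M : 'M[C]_(m, n))
  : 'M[C]_(n, m) := (map_mx Num.conj M)^T.

(* Main.v *)
Require Import Defs.
From HB Require Import structures.
From mathcomp Require Import all_boot all_order all_algebra all_fingroup.
From mathcomp Require Import complex reals.
From mathcomp Require Import ring.
Import GRing.Theory Num.Theory.
Local Open Scope ring_scope.

Section Aux.
Variable R : realType.
Variable gT : finGroupType.
Local Notation C := (R[i]).

Lemma unit_norm {A : seq C} {a} : finite_subgroup_units A -> a \in A ->
  a * Num.conj a = 1.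
Proof.
case=> A0 A1 AM AV aA.
have a0 : a != 0 by apply: contraNneq A0 => <-.
have powA k : a ^+ k \in A.
  elim: k => [|k IH]; first by rewrite expr0.
  by rewrite exprS AM.
set s := mkseq (fun k => a ^+ k) (size A).+1.
have nU : ~~ uniq s.
  apply/negP => U.
  have sub : {subset s <= A} by move=> x /mapP [k _ ->].
  have := uniq_leq_size U sub.
  by rewrite size_mkseq ltnn.
case/(uniqPn 0): nU => i [j [lij ljs]].
rewrite size_mkseq in ljs.
rewrite !nth_mkseq //; last by apply: ltn_trans ljs.
move=> eij.
have e1 : a ^+ (j - i) = 1.
  have : a ^+ i * a ^+ (j - i) = a ^+ i * 1.
    by rewrite -exprD subnKC ?(ltnW lij) // mulr1 eij.
  by move/(mulfI (expf_neq0 i a0)).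
have n1 : `|a| = 1.
  apply/eqP; rewrite -(@pexpr_eq1 _ _ (j - i)) ?subn_gt0 //.
  by rewrite -normrX e1 normr1.
by rewrite -normCK n1 expr1n.
Qed.

Lemma conj_inv {A : seq C} {a} : finite_subgroup_units A -> a \in A ->
  Num.conj a = a^-1.
Proof.
move=> fA aA; have := unit_norm fA aA.
case: fA => A0 _ _ _; have a0 : a != 0 by apply: contraNneq A0 => <-.
by move=> H; rewrite -[LHS]mul1r -(mulVf a0) -mulrA H mulr1.
Qed.

Lemma sum_delta (F : 'I_#|gT| -> C) (c : gT) :
  \sum_k ((c == gidx k)%:R * F k) = F (enum_rank c).
Proof.
rewrite (bigD1 (enum_rank c)) //= /gidx enum_rankK eqxx mul1r big1 ?addr0 //.
move=> k hk; rewrite (_ : (c == enum_val k) = false) ?mul0r //.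
apply/negbTE; apply: contra hk => /eqP ->; by rewrite enum_valK.
Qed.

Lemma entry (psi : gT -> gT -> C) (M : 'M[C]_#|gT|) a g i j :
  (Rmat psi a g *m M *m adjmx (Lmat psi a g)) i j =
  a * Num.conj a * psi (gidx i) g * Num.conj (psi g (g^-1 * gidx j)%g)
   * M (enum_rank (gidx i * g)%g) (enum_rank (g^-1 * gidx j)%g).
Proof.
have eqv : forall l, (gidx j == (g * gidx l)%g) = (g^-1 * gidx j == gidx l)%g.
  move=> l; apply/eqP/eqP => [->|<-]; by rewrite ?mulKg ?mulKVg.
rewrite mxE.
transitivity (\sum_l (((g^-1 * gidx j)%g == gidx l)%:R *
   (a * psi (gidx i) g * M (enum_rank (gidx i * g)%g) l *
    Num.conj (a * psi g (g^-1 * gidx j)%g)))).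
  apply: eq_bigr => l _.
  rewrite /adjmx !mxE.
  have -> : \sum_k (Rmat psi a g i k * M k l) =
      a * psi (gidx i) g * M (enum_rank (gidx i * g)%g) l.
    rewrite -[RHS](@sum_delta (fun k => a * psi (gidx i) g * M k l)).
    apply: eq_bigr => k _; rewrite mxE; ring.
  rewrite eqv !rmorphM /= rmorph_nat; ring.
rewrite sum_delta rmorphM /=; ring.
Qed.

End Aux.

Theorem lemma4p3 (R : realType) (gT : finGroupType) (A : seq R[i])
    (psi : gT -> gT -> R[i]) :
  finite_subgroup_units A ->
  normalised_cocycle A psi ->
  forall M : 'M[R[i]]_#|gT|,
    (forall (a : R[i]) (g : gT), a \in A ->
       Rmat psi a g *m M *m adjmx (Lmat psi a g) = M)
    <->
    (exists phi : gT -> R[i],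
       M = \matrix_(i, j) (psi (gidx i) (gidx j) * phi (gidx i * gidx j)%g)).
Proof.
move=> fA [psiA psi1 coc] M.
have fA' := fA; case: fA' => A0 A1 _ _.
have psi0 g h : psi g h != 0 by apply: contraNneq A0 => <-.
split.
- move=> H; exists (fun z => M (enum_rank 1%g) (enum_rank z)).
  apply/matrixP => i j; rewrite mxE.
  have := H 1 ((gidx i)^-1)%g A1.
  move/matrixP => /(_ i j); rewrite entry => <-.
  rewrite invgK mulgV rmorph1 mulr1 mul1r (conj_inv _ fA (psiA _ _)).
  have := coc (gidx i) ((gidx i)^-1)%g (gidx i * gidx j)%g.
  rewrite mulgV (proj2 (psi1 _)) mulr1 mulKg => ->.
  by rewrite mulfK.
- move=> [phi ->] a g aA; apply/matrixP => i j.
  rewrite entry !mxE /gidx !enum_rankK (unit_norm _ fA aA) mul1r.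
  rewrite -!/(gidx _).
  set x := gidx i; set y := gidx j.
  rewrite (conj_inv _ fA (psiA _ _)).
  have := coc x g (g^-1 * y)%g; rewrite mulKVg => e.
  rewrite -mulgA mulKVg.
  by rewrite mulrA [_ / _ * _]mulrAC e mulfK.
Qed.
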